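(* Let $i\in\{1,2\}$ and let $(X,e_X,\mu_X)$ and $(Y,e_Y,\mu_Y)$ be H-equivalent $\mathrm{NP}_i$-digital H-spaces. If $(X,e_X,\mu_X)$ is homotopy-associative, then $(Y,e_Y,\mu_Y)$ is homotopy-associative.
   Context: A digital image is a finite set $X\subset\mathbb{Z}^n$ with a reflexive symmetric adjacency relation (a finite reflexive graph); continuous maps send adjacent points to adjacent points. On products, $\mathrm{NP}_u$ declares two tuples adjacent iff coordinates are adjacent in at most $u$ positions and equal elsewhere. An $\mathrm{NP}_i$-homotopy from $f$ to $g:X\to Y$ is an $\mathrm{NP}_i$-continuous $H:X\times[0,m]_{\mathbb{Z}}\to Y$ with $H(\cdot,0)=f$, $H(\cdot,m)=g$; write $f\simeq_i g$ (products in the domain carry $\mathrm{NP}_i$). $(f,g)(x)=(f(x),g(x))$, $(f\times g)(x,y)=(f(x),g(y))$; $c_e$ is the constant map at $e$. An $\mathrm{NP}_i$-digital H-space is $(X,e,\mu)$ with $\mu:X\times X\to X$ $\mathrm{NP}_i$-continuous, $\mu\circ(\mathrm{id}_X,c_e)\simeq_i\mathrm{id}_X$, $\mu\circ(c_e,\mathrm{id}_X)\simeq_i\mathrm{id}_X$ (homotopies need not be pointed). It is homotopy-associative if $\mu\circ(\mathrm{id}_X\times\mu)\simeq_i\mu\circ(\mu\times\mathrm{id}_X)$ as maps $X\times X\times X\to X$. Two H-spaces $(X,e_X,\mu_X)$, $(Y,e_Y,\mu_Y)$ are H-equivalent if there are continuous pointed maps $f:(X,e_X)\to(Y,e_Y)$,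 $g:(Y,e_Y)\to(X,e_X)$ with $f\circ g\simeq_i\mathrm{id}_Y$, $g\circ f\simeq_i\mathrm{id}_X$, $f\circ\mu_X\simeq_i\mu_Y\circ(f\times f)$, $g\circ\mu_Y\simeq_i\mu_X\circ(g\times g)$. *)

(* Defs.v *)
From mathcomp Require Import all_boot.
Set Implicit Arguments. Unset Strict Implicit. Unset Printing Implicit Defensive.

Record dimage := DImage {
  dcar :> finType;
  dadj : rel dcar;
  dadj_refl : reflexive dadj;
  dadj_sym : symmetric dadj }.

(* The digital interval [0,m]_Z with c_1 adjacency (|s - t| <= 1). *)
Definition iadj (m : nat) : rel 'I_m.+1 := fun s t => (s <= t.+1) && (t <= s.+1).
Lemma iadj_refl m : reflexive (@iadj m).
Proof. by move=> s; rewrite /iadj leqnSn. Qed.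
Lemma iadj_sym m : symmetric (@iadj m).
Proof. by move=> s t; rewrite /iadj andbC. Qed.
Definition dint (m : nat) : dimage := DImage (@iadj_refl m) (@iadj_sym m).

Definition cont1 (A B : dimage) (f : A -> B) :=
  forall a a', dadj a a' -> dadj (f a) (f a').

(* NP_u adjacency on products with 2, 3, 4 factors: all coordinates adjacent
   (adjacency being reflexive) and at most u coordinates different. *)
Definition np2 (u : nat) (A B : dimage) (a a' : A) (b b' : B) :=
  [&& dadj a a', dadj b b' & (a != a') + (b != b') <= u].
Definition np3 (u : nat) (A B C : dimage) (a a' : A) (b b' : B) (c c' : C) :=
  [&& dadj a a', dadj b b', dadj c c' & (a != a') + (b != b') + (c != c') <= u].
Definition np4 (u : nat) (A B C D : dimage) (a a' : A) (b b' : B) (c c' : C)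
  (d d' : D) :=
  [&& dadj a a', dadj b b', dadj c c', dadj d d' &
      (a != a') + (b != b') + (c != c') + (d != d') <= u].

(* NP_u-continuity of maps out of products (maps written in curried form). *)
Definition cont2 (u : nat) (A B E : dimage) (f : A -> B -> E) :=
  forall a a' b b', np2 u a a' b b' -> dadj (f a b) (f a' b').
Definition cont3 (u : nat) (A B C E : dimage) (f : A -> B -> C -> E) :=
  forall a a' b b' c c', np3 u a a' b b' c c' -> dadj (f a b c) (f a' b' c').
Definition cont4 (u : nat) (A B C D E : dimage) (f : A -> B -> C -> D -> E) :=
  forall a a' b b' c c' d d', np4 u a a' b b' c c' d d' ->
    dadj (f a b c d) (f a' b' c' d').

Definition homotopic1 (u : nat) (X Y : dimage) (f g : X -> Y) :=
  exists m (H : X -> dint m -> Y),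
    cont2 u H /\ (forall x, H x ord0 = f x) /\ (forall x, H x ord_max = g x).
Definition homotopic2 (u : nat) (X X' Y : dimage) (f g : X -> X' -> Y) :=
  exists m (H : X -> X' -> dint m -> Y),
    cont3 u H /\ (forall x x', H x x' ord0 = f x x')
              /\ (forall x x', H x x' ord_max = g x x').
Definition homotopic3 (u : nat) (X1 X2 X3 Y : dimage) (f g : X1 -> X2 -> X3 -> Y) :=
  exists m (H : X1 -> X2 -> X3 -> dint m -> Y),
    cont4 u H /\ (forall x y z, H x y z ord0 = f x y z)
              /\ (forall x y z, H x y z ord_max = g x y z).

Definition HSpace (u : nat) (X : dimage) (e : X) (mu : X -> X -> X) :=
  [/\ cont2 u mu,
      homotopic1 u (fun x => mu x e) id &
      homotopic1 u (fun x => mu e x) id].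

Definition hassoc (u : nat) (X : dimage) (mu : X -> X -> X) :=
  homotopic3 u (fun x y z => mu x (mu y z)) (fun x y z => mu (mu x y) z).

Definition HEquiv (u : nat) (X : dimage) (eX : X) (muX : X -> X -> X)
  (Y : dimage) (eY : Y) (muY : Y -> Y -> Y) :=
  exists (f : X -> Y) (g : Y -> X),
    cont1 f /\ cont1 g /\ f eX = eY /\ g eY = eX /\
    homotopic1 u (f \o g) id /\
    homotopic1 u (g \o f) id /\
    homotopic2 u (fun x x' => f (muX x x')) (fun x x' => muY (f x) (f x')) /\
    homotopic2 u (fun y y' => g (muY y y')) (fun y y' => muX (g y) (g y')).

(* Main.v *)
Require Import Defs.
From mathcomp Require Import all_boot.
From mathcomp Require Import zify.
From Stdlib Require Import Lia.
Set Implicit Arguments. Unset Strict Implicit. Unset Printing Implicit Defensive.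

Definition Rk (A : dimage) (x x' : A) (k : nat) := dadj x x' && ((x != x') <= k).

Lemma Rk_adj (A : dimage) (x x' : A) k : Rk x x' k -> dadj x x'.
Proof. by case/andP. Qed.

Lemma nle (b : bool) (n k : nat) : (b -> 0 < n) -> n <= k -> b <= k.
Proof. case: b => // H; have := H isT; lia. Qed.

Lemma Rk_c1 (A B : dimage) (f : A -> B) x x' k :
  cont1 f -> Rk x x' k -> Rk (f x) (f x') k.
Proof.
move=> cf /andP[h hk]; rewrite /Rk cf //=.
apply: (nle _ hk) => H; case: (eqVneq x x') H => [->|//]; by rewrite eqxx.
Qed.

Lemma Rk_c2 u (A B E : dimage) (F : A -> B -> E) a a' b b' ka kb :
  cont2 u F -> Rk a a' ka -> Rk b b' kb -> ka + kb <= u ->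
  Rk (F a b) (F a' b') (ka + kb).
Proof.
move=> cF /andP[ha hka] /andP[hb hkb] hu.
rewrite /Rk cF /=; last by rewrite /np2 ha hb (leq_trans (leq_add hka hkb) hu).
apply: (nle _ (leq_add hka hkb)) => H.
case: (eqVneq a a') H => [->|]; case: (eqVneq b b') => [->|] //=; by rewrite eqxx.
Qed.

Lemma Rk_c3 u (A B C E : dimage) (F : A -> B -> C -> E) a a' b b' c c' ka kb kc :
  cont3 u F -> Rk a a' ka -> Rk b b' kb -> Rk c c' kc -> ka + kb + kc <= u ->
  Rk (F a b c) (F a' b' c') (ka + kb + kc).
Proof.
move=> cF /andP[ha hka] /andP[hb hkb] /andP[hc hkc] hu.
have hs := leq_add (leq_add hka hkb) hkc.
rewrite /Rk cF /=; last by rewrite /np3 ha hb hc (leq_trans hs hu).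
apply: (nle _ hs) => H.
case: (eqVneq a a') H => [->|]; case: (eqVneq b b') => [->|];
  case: (eqVneq c c') => [->|] //=; by rewrite eqxx.
Qed.

Lemma Rk_c4 u (A B C D E : dimage) (F : A -> B -> C -> D -> E)
  a a' b b' c c' d d' ka kb kc kd :
  cont4 u F -> Rk a a' ka -> Rk b b' kb -> Rk c c' kc -> Rk d d' kd ->
  ka + kb + kc + kd <= u ->
  Rk (F a b c d) (F a' b' c' d') (ka + kb + kc + kd).
Proof.
move=> cF /andP[ha hka] /andP[hb hkb] /andP[hc hkc] /andP[hd hkd] hu.
have hs := leq_add (leq_add (leq_add hka hkb) hkc) hkd.
rewrite /Rk cF /=; last by rewrite /np4 ha hb hc hd (leq_trans hs hu).
apply: (nle _ hs) => H.
case: (eqVneq a a') H => [->|]; case: (eqVneq b b') => [->|];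
  case: (eqVneq c c') => [->|]; case: (eqVneq d d') => [->|] //=; by rewrite eqxx.
Qed.

Lemma np4R u (A B C D : dimage) (a a' : A) (b b' : B) (c c' : C) (d d' : D) :
  np4 u a a' b b' c c' d d' ->
  exists ka kb kc kd, [/\ Rk a a' ka, Rk b b' kb, Rk c c' kc, Rk d d' kd &
     ka + kb + kc + kd <= u].
Proof.
case/and5P => ha hb hc hd hu.
exists (a != a'), (b != b'), (c != c'), (d != d').
by rewrite /Rk ha hb hc hd !leqnn.
Qed.

Lemma shift_iadj m n k (s s' : 'I_m.+1) (t t' : 'I_n.+1) :
  val s + k = val t -> val s' + k = val t' ->
  iadj s s' = iadj t t' /\ (s != s') = (t != t').
Proof.
move=> e e'; split.
  rewrite /iadj -(leq_add2r k s) -(leq_add2r k s') !addSn e e'.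
  by [].
rewrite -!val_eqE /= -e -e'; by rewrite eqn_add2r.
Qed.

Lemma hom3_sym u (X1 X2 X3 Y : dimage) (f g : X1 -> X2 -> X3 -> Y) :
  homotopic3 u f g -> homotopic3 u g f.
Proof.
move=> [m [H [cH [s e]]]].
exists m, (fun x y z (t : dint m) => H x y z (rev_ord t)); split; [|split].
- move=> a a' b b' c c' t t' /and5P[ha hb hc ht hu]; apply: cH.
  rewrite /np4 ha hb hc (inj_eq rev_ord_inj) hu andbT /=.
  move: ht; rewrite /= /iadj /= => /andP[h1 h2].
  have l1 := ltn_ord t; have l2 := ltn_ord t'; apply/andP; split; lia.
- move=> x y z; rewrite -e; congr (H _ _ _ _); apply: val_inj => /=; lia.
- move=> x y z; rewrite -s; congr (H _ _ _ _); apply: val_inj => /=; lia.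
Qed.

Lemma hom3_trans u (X1 X2 X3 Y : dimage) (f g h : X1 -> X2 -> X3 -> Y) :
  homotopic3 u f g -> homotopic3 u g h -> homotopic3 u f h.
Proof.
move=> [m1 [H1 [c1 [s1 e1]]]] [m2 [H2 [c2 [s2 e2]]]].
exists (m1 + m2), (fun x y z (t : dint (m1 + m2)) =>
  if val t <= m1 then H1 x y z (inord t) else H2 x y z (inord (t - m1))).
split; [|split].
- move=> a a' b b' c c' t t' /and5P[ha hb hc ht hu].
  move: (ht); rewrite /= /iadj => /andP[h1 h2].
  have lt := ltn_ord t; have lt' := ltn_ord t'.
  case: (leqP t m1) => Ht; case: (leqP t' m1) => Ht'.
  + have [E1 E2] := @shift_iadj m1 (m1 + m2) 0 (inord t) (inord t') t t'
      ltac:(rewrite /= addn0 inordK //; lia) ltac:(rewrite /= addn0 inordK //; lia).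
    apply: c1; rewrite /np4 ha hb hc /=; move: ht hu; rewrite -E2 /= => ht ->; rewrite andbT; move: ht; by rewrite -E1.
  + have et : t = m1 :> nat by lia.
    have et' : t' = m1.+1 :> nat by lia.
    have -> : (inord t : 'I_m1.+1) = ord_max by apply: val_inj; rewrite /= inordK et.
    rewrite e1 -s2; apply: c2.
    rewrite /np4 ha hb hc /= /iadj inordK et' ?subSnn //=; last lia.
    have -> : (ord0 != inord 1 :> 'I_m2.+1) = (t != t').
      by rewrite -!val_eqE /= inordK ?et ?et' ?eqn_leq /=; lia.
    by [].
  + have et' : t' = m1 :> nat by lia.
    have et : t = m1.+1 :> nat by lia.
    have -> : (inord t' : 'I_m1.+1) = ord_max by apply: val_inj; rewrite /= inordK et'.
    rewrite e1 -s2; apply: c2.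
    rewrite /np4 ha hb hc /= /iadj inordK et ?subSnn //=; last lia.
    have -> : (inord 1 != ord0 :> 'I_m2.+1) = (t != t').
      by rewrite -!val_eqE /= inordK ?et ?et' ?eqn_leq /=; lia.
    by [].
  + have [E1 E2] := @shift_iadj m2 (m1 + m2) m1 (inord (t - m1)) (inord (t' - m1)) t t'
      ltac:(rewrite /= inordK; lia) ltac:(rewrite /= inordK; lia).
    apply: c2; rewrite /np4 ha hb hc /=; move: ht hu; rewrite -E2 /= => ht ->; rewrite andbT; move: ht; by rewrite -E1.
- move=> x y z /=; rewrite -s1; congr (H1 _ _ _ _); apply: val_inj; by rewrite /= inordK.
- move=> x y z /=; case: leqP => H.
  + have m20 : m2 = 0 by lia.
    have -> : (inord (m1 + m2) : 'I_m1.+1) = ord_max by apply: val_inj; rewrite /= inordK; lia.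
    rewrite e1 -e2 -s2; congr (H2 _ _ _ _); apply: val_inj => /=; lia.
  + rewrite -e2; congr (H2 _ _ _ _); apply: val_inj; rewrite /= inordK; lia.
Qed.

Theorem mainTheorem4 (i : nat) (Hi : (i == 1) || (i == 2))
  (X : dimage) (eX : X) (muX : X -> X -> X)
  (Y : dimage) (eY : Y) (muY : Y -> Y -> Y) :
  HSpace i eX muX -> HSpace i eY muY ->
  HEquiv i eX muX eY muY ->
  hassoc i muX -> hassoc i muY.
Proof.
move=> [cX _ _] [cY _ _] [f [g [cf [cg [_ [_ [Hfg [_ [_ HgY]]]]]]]]].
move=> [mA [A [cA [sA eA]]]].
move: Hfg HgY => [m1 [H1 [c1 [s1 e1]]]] [mG [G [cG [sG eG]]]].
rewrite /hassoc.
apply: (@hom3_trans _ _ _ _ _ _ (fun a b c => f (g (muY a (muY b c))))).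
  apply: hom3_sym; exists m1, (fun a b c t => H1 (muY a (muY b c)) t); split; [|split] => //.
  move=> a a' b b' c c' t t' /np4R[ka [kb [kc [kt [Ra Rb Rc Rt Hk]]]]].
  have h1 : kb + kc <= i by lia.
  have h2 : ka + (kb + kc) <= i by lia.
  have h3 : ka + (kb + kc) + kt <= i by lia.
  exact: Rk_adj (Rk_c2 c1 (Rk_c2 cY Ra (Rk_c2 cY Rb Rc h1) h2) Rt h3).
apply: (@hom3_trans _ _ _ _ _ _ (fun a b c => f (muX (g a) (g (muY b c))))).
  exists mG, (fun a b c t => f (G a (muY b c) t)); split; [|split] => //=;
    try by move=> *; rewrite ?sG ?eG.
  move=> a a' b b' c c' t t' /np4R[ka [kb [kc [kt [Ra Rb Rc Rt Hk]]]]].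
  have h1 : kb + kc <= i by lia.
  have h3 : ka + (kb + kc) + kt <= i by lia.
  exact: Rk_adj (Rk_c1 cf (Rk_c3 cG Ra (Rk_c2 cY Rb Rc h1) Rt h3)).
apply: (@hom3_trans _ _ _ _ _ _ (fun a b c => f (muX (g a) (muX (g b) (g c))))).
  exists mG, (fun a b c t => f (muX (g a) (G b c t))); split; [|split] => //=;
    try by move=> *; rewrite ?sG ?eG.
  move=> a a' b b' c c' t t' /np4R[ka [kb [kc [kt [Ra Rb Rc Rt Hk]]]]].
  have h1 : kb + kc + kt <= i by lia.
  have h3 : ka + (kb + kc + kt) <= i by lia.
  exact: Rk_adj (Rk_c1 cf (Rk_c2 cX (Rk_c1 cg Ra) (Rk_c3 cG Rb Rc Rt h1) h3)).
apply: (@hom3_trans _ _ _ _ _ _ (fun a b c => f (muX (muX (g a) (g b)) (g c)))).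
  exists mA, (fun a b c t => f (A (g a) (g b) (g c) t)); split; [|split] => //=;
    try by move=> *; rewrite ?sA ?eA.
  move=> a a' b b' c c' t t' /np4R[ka [kb [kc [kt [Ra Rb Rc Rt Hk]]]]].
  exact: Rk_adj (Rk_c1 cf (Rk_c4 cA (Rk_c1 cg Ra) (Rk_c1 cg Rb) (Rk_c1 cg Rc) Rt Hk)).
apply: (@hom3_trans _ _ _ _ _ _ (fun a b c => f (muX (g (muY a b)) (g c)))).
  apply: hom3_sym.
  exists mG, (fun a b c t => f (muX (G a b t) (g c))); split; [|split] => //=;
    try by move=> *; rewrite ?sG ?eG.
  move=> a a' b b' c c' t t' /np4R[ka [kb [kc [kt [Ra Rb Rc Rt Hk]]]]].
  have h1 : ka + kb + kt <= i by lia.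
  have h3 : ka + kb + kt + kc <= i by lia.
  exact: Rk_adj (Rk_c1 cf (Rk_c2 cX (Rk_c3 cG Ra Rb Rt h1) (Rk_c1 cg Rc) h3)).
apply: (@hom3_trans _ _ _ _ _ _ (fun a b c => f (g (muY (muY a b) c)))).
  apply: hom3_sym.
  exists mG, (fun a b c t => f (G (muY a b) c t)); split; [|split] => //=;
    try by move=> *; rewrite ?sG ?eG.
  move=> a a' b b' c c' t t' /np4R[ka [kb [kc [kt [Ra Rb Rc Rt Hk]]]]].
  have h1 : ka + kb <= i by lia.
  have h3 : ka + kb + kc + kt <= i by lia.
  exact: Rk_adj (Rk_c1 cf (Rk_c3 cG (Rk_c2 cY Ra Rb h1) Rc Rt h3)).
exists m1, (fun a b c t => H1 (muY (muY a b) c) t); split; [|split] => //.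
move=> a a' b b' c c' t t' /np4R[ka [kb [kc [kt [Ra Rb Rc Rt Hk]]]]].
have h1 : ka + kb <= i by lia.
have h2 : ka + kb + kc <= i by lia.
have h3 : ka + kb + kc + kt <= i by lia.
exact: Rk_adj (Rk_c2 c1 (Rk_c2 cY (Rk_c2 cY Ra Rb h1) Rc h2) Rt h3).
Qed.
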